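(* Let $\Theta_1,\Theta_2$ be two nuclear contracting Dwork operators on $M^*$ such that $\Theta_1\equiv\Theta_2\pmod{\pi^i}$ (i.e. $(\Theta_1-\Theta_2)(M^* )\subset\pi^iM^*$) for some integer $i\ge0$. Then $\det(I-T\Theta_1|M^* )\equiv\det(I-T\Theta_2|M^* )\pmod{\pi^i}$ (coefficientwise).
   Context: $R$ is a complete discrete valuation ring of characteristic $0$ with uniformizer $\pi$, residue field $\mathbf{F}_q$, fraction field $K$, valuation $\mathrm{ord}_\pi$, $|a|_\pi=p^{-\mathrm{ord}_\pi a}$. Fix $n\ge1$; $X^u=\prod X_i^{u_i}$, $|u|=\sum u_i$. $A_0=\{\sum a_uX^u:a_u\in R,\ |a_u|_\pi\to0\}$ with Gauss norm $\|\cdot\|$, $A=\{\sum a_uX^u\in A_0:\liminf_{|u|\to\infty}\mathrm{ord}_\pi a_u/|u|>0\}$. $\sigma$ is an $R$-algebra endomorphism of $A_0$ with $\sigma(X_i)=X_i^q+\pi f_i$, $f_i\in A$. $L(b,c)=\{\sum a_vX^v:\mathrm{ord}_\pi a_v\ge b|v|+c\}$; $b_\sigma>0$ is a fixed rational with $\pi f_i\in L(b_\sigma,0)$. $M^*=\{\sum_ja_je_j^*:a_j\in A_0,\ \|a_j\|\to0\}$ (countable index set), $M^*(b,c)=\{\sum a_je_j^*\in M^*:a_j\in L(b,c)\}$. A Dwork operator on $M^*$ is a continuous $R$-linear $\Theta$ with $\Theta(\sigma(a)f)=a\Theta(f)$. Writing $\Theta(X^ve_{j_2}^* )=\sum G^*_{\{u,j_1\},\{v,j_2\}}X^ue_{j_1}^*$,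 it is nuclear if for fixed $u,v$, $\lim_{j_1\to\infty}\inf_{j_2}\mathrm{ord}_\pi G^*_{\{u,j_1\},\{v,j_2\}}=\infty$; contracting if $\Theta(M^*(b,c))\subset M^*(qb,c+c_1)$ for some rationals $b>0,c,c_1$. The Fredholm determinant: choose such $b$ with $0<b\le b_\sigma$ (passing to a totally ramified extension of $R$ one may take $b$ an integer) and let $G$ be the matrix of $\Theta$ on the $K$-Banach space $M^*(b,0)\otimes K$ w.r.t. the basis $\{\pi^{b|u|}X^ue_j^*\}$; then $\det(I-T\Theta|M^* ):=\det(I-TG)$, an entire function independent of the choice of $b$ (it also equals $\det(I-TG^* )$). *)

(* Defs.v *)
From HB Require Import structures.
From mathcomp Require Import all_boot all_order all_algebra.
From mathcomp Require Import finmap.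
Set Implicit Arguments. Unset Strict Implicit. Unset Printing Implicit Defensive.
Import Order.TTheory GRing.Theory Num.Theory.
Local Open Scope ring_scope.


Definition dvdpi (R : idomainType) (pi : R) (k : nat) (a : R) : Prop :=
  exists c : R, a = pi ^+ k * c.

(* ord_pi a >= r for a rational r  (ord_pi 0 = +oo) *)
Definition ord_ge (R : idomainType) (pi : R) (a : R) (r : rat) : Prop :=
  forall k : nat, (k%:R - 1 < r) -> dvdpi pi k a.

Definition is_cdvr (R : idomainType) (pi : R) (q : nat) : Prop :=
  (pi != 0) /\ ~~ (pi \is a GRing.unit) /\
  (forall a : R, a != 0 -> exists (k : nat) (u : R), u \is a GRing.unit /\ a = pi ^+ k * u) /\
  (forall m : nat, (m.+1)%:R != 0 :> R) /\
  (forall s : nat -> R,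
      (forall N, exists M, forall m k, (M <= m)%N -> (M <= k)%N -> dvdpi pi N (s m - s k)) ->
      exists l, forall N, exists M, forall m, (M <= m)%N -> dvdpi pi N (s m - l)) /\
  (exists reps : seq R, size reps = q /\
     (forall a : R, exists2 r, r \in reps & dvdpi pi 1 (a - r)) /\
     (forall i j, (i < q)%N -> (j < q)%N -> dvdpi pi 1 (reps`_i - reps`_j) -> i = j)).

Definition mon (n : nat) := {ffun 'I_n -> nat}.
Definition mdeg (n : nat) (u : mon n) : nat := (\sum_(i < n) u i)%N.
Definition mon0 (n : nat) : mon n := [ffun => 0%N].
Definition monX (n : nat) (i : 'I_n) (e : nat) : mon n := [ffun k => if k == i then e else 0%N].

(* index set of the basis X^u e_j^*  of M^*  *)
Definition idx (n : nat) (J : countType) := (mon n * J)%type.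

Definition cofin (T : eqType) (P : T -> Prop) : Prop :=
  exists s : seq T, forall x, x \notin s -> P x.

Definition tends0 (R : idomainType) (pi : R) (T : eqType) (a : T -> R) : Prop :=
  forall N : nat, cofin (fun x => dvdpi pi N (a x)).

(* A_0 is {a : mon n -> R | tends0 pi a}; its multiplication *)
Definition mulA (R : idomainType) (n : nat) (a b : mon n -> R) : mon n -> R :=
  fun w =>
  \sum_(u : {ffun 'I_n -> 'I_((\max_(i < n) w i)%N).+1} | [forall i, (u i <= w i)%N])
     a [ffun i => nat_of_ord (u i)] * b [ffun i => (w i - u i)%N].

Definition monoA (R : idomainType) (n : nat) (u : mon n) : mon n -> R :=
  fun v => (v == u)%:R.

Definition inA (R : idomainType) (pi : R) (n : nat) (a : mon n -> R) : Prop :=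
  tends0 pi a /\
  exists eps : rat, 0 < eps /\ cofin (fun u => ord_ge pi (a u) (eps * (mdeg u)%:R)).

Definition inL (R : idomainType) (pi : R) (n : nat) (b c : rat) (a : mon n -> R) : Prop :=
  forall v, ord_ge pi (a v) (b * (mdeg v)%:R + c).

Definition is_sigma (R : idomainType) (pi : R) (q n : nat) (f : 'I_n -> mon n -> R)
    (sigma : (mon n -> R) -> mon n -> R) : Prop :=
  (forall a, tends0 pi a -> tends0 pi (sigma a)) /\
  (forall (r : R) a b, tends0 pi a -> tends0 pi b ->
      sigma (fun u => r * a u + b u) = (fun u => r * sigma a u + sigma b u)) /\
  (forall a b, tends0 pi a -> tends0 pi b -> sigma (mulA a b) = mulA (sigma a) (sigma b)) /\
  sigma (monoA R (mon0 n)) = monoA R (mon0 n) /\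
  (forall i, sigma (monoA R (monX i 1)) = (fun u => monoA R (monX i q) u + pi * f i u)).

(* M^*  : coefficient families x (u, j) (coefficient of X^u e_j^* ) tending to 0 *)
Definition inM (R : idomainType) (pi : R) (n : nat) (J : countType) (x : idx n J -> R) : Prop :=
  tends0 pi x.

Definition inMb (R : idomainType) (pi : R) (n : nat) (J : countType) (b c : rat)
    (x : idx n J -> R) : Prop :=
  forall k, ord_ge pi (x k) (b * (mdeg k.1)%:R + c).

Definition actM (R : idomainType) (n : nat) (J : countType) (a : mon n -> R)
    (x : idx n J -> R) : idx n J -> R :=
  fun k => mulA a (fun u => x (u, k.2)) k.1.

Definition is_dwork (R : idomainType) (pi : R) (n : nat) (J : countType)
    (sigma : (mon n -> R) -> mon n -> R) (Th : (idx n J -> R) -> idx n J -> R) : Prop :=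
  (forall x, inM pi x -> inM pi (Th x)) /\
  (forall (r : R) x y, inM pi x -> inM pi y ->
      Th (fun k => r * x k + y k) = (fun k => r * Th x k + Th y k)) /\
  (forall N : nat, exists N' : nat, forall x, inM pi x ->
      (forall k, dvdpi pi N' (x k)) -> forall k, dvdpi pi N (Th x k)) /\
  (forall a x, tends0 pi a -> inM pi x -> Th (actM (sigma a) x) = actM a (Th x)).

Definition bvec (R : idomainType) (n : nat) (J : countType) (l : idx n J) : idx n J -> R :=
  fun k => (k == l)%:R.

Definition Gstar (R : idomainType) (n : nat) (J : countType)
    (Th : (idx n J -> R) -> idx n J -> R) (k l : idx n J) : R :=
  Th (bvec R l) k.

Definition nuclear (R : idomainType) (pi : R) (n : nat) (J : countType)
    (Th : (idx n J -> R) -> idx n J -> R) : Prop :=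
  forall (u v : mon n) (N : nat),
    cofin (fun j1 : J => forall j2 : J, dvdpi pi N (Gstar Th (u, j1) (v, j2))).

Definition contracting (R : idomainType) (pi : R) (q n : nat) (J : countType)
    (Th : (idx n J -> R) -> idx n J -> R) : Prop :=
  exists b c c1 : rat, 0 < b /\
    forall x, inM pi x -> inMb pi b c x -> inMb pi (q%:R * b) (c + c1) (Th x).

Definition fdet (R : idomainType) (T : choiceType) (G : T -> T -> R) (S : {fset T}) : R :=
  let s := in_tuple (enum_fset S) in \det (\matrix_(i, j) G (tnth s i) (tnth s j)).

(* c is the m-th coefficient of det(I - T G): the pi-adically convergent
   unordered sum (-1)^m sum_{|S| = m} det(G_S) *)
Definition fred_coef (R : idomainType) (pi : R) (T : choiceType) (G : T -> T -> R)
    (m : nat) (c : R) : Prop :=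
  forall N : nat, exists F0 : {fset {fset T}},
    (forall S, S \in F0 -> size (enum_fset S) = m) /\
    forall F : {fset {fset T}}, (F0 `<=` F)%fset -> (forall S, S \in F -> size (enum_fset S) = m) ->
      dvdpi pi N (c - (-1) ^+ m * \sum_(S <- enum_fset F) fdet G S).

Definition fred_det (R : idomainType) (pi : R) (n : nat) (J : countType)
    (Th : (idx n J -> R) -> idx n J -> R) (c : nat -> R) : Prop :=
  forall m, fred_coef pi (Gstar Th) m (c m).

(* Main.v *)
Require Import Defs.
From HB Require Import structures.
From mathcomp Require Import all_boot all_order all_algebra.
From mathcomp Require Import finmap.
From mathcomp Require Import ring.
Import Order.TTheory GRing.Theory Num.Theory.
Local Open Scope ring_scope.

Section Aux.
Variables (R : idomainType) (pi : R) (i : nat).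

Lemma dv0 : dvdpi pi i 0.
Proof. by exists 0; rewrite mulr0. Qed.

Lemma dvD a b : dvdpi pi i a -> dvdpi pi i b -> dvdpi pi i (a + b).
Proof. by move=> [x ->] [y ->]; exists (x + y); rewrite mulrDr. Qed.

Lemma dvM a b : dvdpi pi i b -> dvdpi pi i (a * b).
Proof. by move=> [y ->]; exists (a * y); rewrite mulrCA. Qed.

Lemma dvN a : dvdpi pi i a -> dvdpi pi i (- a).
Proof. by move=> [y ->]; exists (- y); rewrite mulrN. Qed.

Definition cg (a b : R) := dvdpi pi i (a - b).

Lemma cg_sum (I : Type) (r : seq I) (F G : I -> R) :
  (forall x, cg (F x) (G x)) -> cg (\sum_(x <- r) F x) (\sum_(x <- r) G x).
Proof.
move=> H; apply: (big_ind2 cg); first by rewrite /cg subrr; exact: dv0.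
  move=> x1 x2 y1 y2 h1 h2; rewrite /cg.
  have -> : x1 + y1 - (x2 + y2) = (x1 - x2) + (y1 - y2) by rewrite opprD addrACA.
  exact: dvD.
by move=> x _.
Qed.

Lemma cg_prod (I : finType) (F G : I -> R) :
  (forall x, cg (F x) (G x)) -> cg (\prod_x F x) (\prod_x G x).
Proof.
move=> H; apply: (big_ind2 cg); first by rewrite /cg subrr; exact: dv0.
  move=> x1 x2 y1 y2 h1 h2; rewrite /cg.
  have -> : x1 * y1 - x2 * y2 = x1 * (y1 - y2) + y2 * (x1 - x2).
    by ring.
  by apply: dvD; apply: dvM.
by move=> x _.
Qed.

Lemma cg_det k (A B : 'M[R]_k) : (forall a b, cg (A a b) (B a b)) -> cg (\det A) (\det B).
Proof.
move=> H; rewrite /determinant; apply: cg_sum => s; rewrite /cg -mulrBr.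
by apply: dvM; apply: cg_prod.
Qed.
End Aux.

Theorem lemma4p13 (R : idomainType) (pi : R) (q n : nat) (J : countType)
    (f : 'I_n -> mon n -> R) (bsig : rat) (sigma : (mon n -> R) -> mon n -> R)
    (Th1 Th2 : (idx n J -> R) -> idx n J -> R) (i : nat) (c1 c2 : nat -> R) :
  is_cdvr pi q -> (0 < n)%N ->
  (forall k, inA pi (f k)) -> 0 < bsig ->
  (forall k, inL pi bsig 0 (fun u => pi * f k u)) ->
  is_sigma pi q f sigma ->
  is_dwork pi sigma Th1 -> nuclear pi Th1 -> contracting pi q Th1 ->
  is_dwork pi sigma Th2 -> nuclear pi Th2 -> contracting pi q Th2 ->
  (forall x, inM pi x -> forall k, dvdpi pi i (Th1 x k - Th2 x k)) ->
  fred_det pi Th1 c1 -> fred_det pi Th2 c2 ->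
  forall m, dvdpi pi i (c1 m - c2 m).
Proof.
move=> _ _ _ _ _ _ _ _ _ _ _ _ HT F1 F2 m.
have HG : forall k l, @cg R pi i (Gstar Th1 k l) (Gstar Th2 k l).
  move=> k l; apply: HT => N; exists [:: l] => x; rewrite inE /bvec => /negbTE ->.
  exact: dv0.
have [F01 [S1 H1]] := F1 m i.
have [F02 [S2 H2]] := F2 m i.
have sub1 : (F01 `<=` F01 `|` F02)%fset by apply: fsubsetUl.
have sub2 : (F02 `<=` F01 `|` F02)%fset by apply: fsubsetUr.
have sz : forall S, S \in (F01 `|` F02)%fset -> size (enum_fset S) = m.
  by move=> S; rewrite inE => /orP [/S1|/S2].
have h1 := H1 _ sub1 sz; have h2 := H2 _ sub2 sz.
set s1 := \sum_(S <- _) fdet (Gstar Th1) S in h1.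
set s2 := \sum_(S <- _) fdet (Gstar Th2) S in h2.
have h3 : @cg R pi i s1 s2.
  apply: cg_sum => S; apply: cg_det => a b; rewrite !mxE; exact: HG.
have -> : c1 m - c2 m = (c1 m - (-1) ^+ m * s1) - (c2 m - (-1) ^+ m * s2)
                       + (-1) ^+ m * (s1 - s2).
  by ring.
apply: dvD; last exact: dvM.
by apply: dvD => //; apply: dvN.
Qed.
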